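(* Let $G$ be a convergence group. Then $\mathcal B := \{H^{\diamond} : H\subseteq\Gamma G \text{ equicontinuous}\}$ is a zero neighbourhood base of a group topology $\tau$ on $G$ with the following three properties. First, $\tau$ is locally quasi-convex. Second, the identity map from $G$ (with its convergence structure) to $(G,\tau)$ is continuous. Third, $\tau$ is finer than every locally quasi-convex group topology $\mu$ on $G$ for which the identity $G\to(G,\mu)$ is continuous. In other words, $\tau$ is the locally quasi-convex modification $\tau(G)$ of $G$.
   Context: All groups are abelian. A convergence group is an abelian group with a convergence structure (an assignment to each point $x$ of a collection of filters converging to $x$). This assignment must satisfy three conditions: point ultrafilters converge to their point; finite intersections of filters converging to $x$ converge to $x$; and finer filters converge. The group operation must be compatible: $\mathcal F\to x$, $\mathcal G\to y$ imply $\mathcal F-\mathcal G\to x-y$. Topological groups are convergence groups, with convergent filters being those finer than the neighbourhood filter. $\mathbb T=\mathbb R/\mathbb Z$, $\rho:\mathbb R\to\mathbb T$ is the quotient map, and $\mathbb T_+=\rho([-1/4,1/4])$. $\Gamma G$ is the group of continuous homomorphisms $G\to\mathbb T$. A set $M\subseteq\Gamma G$ is equicontinuous if for every filter $\mathcal F\to0$ in $G$, the filter generated by $\{\varphi(x):\varphi\in M,x\in F\}$, $F\in\mathcal F$, converges to $0$ in $\mathbb T$. For $A\subseteq G$ and $H\subseteq\Gamma G$, set $A^{\circ}=\{\varphi\in\Gamma G:\varphi(A)\subseteq\mathbb T_+\}$ and $H^{\diamond}=\{x\in G: \varphi(x)\in\mathbb T_+ \ \forall \varphi\in H\}$. A subset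 $A$ of a topological group $G$ is quasi-convex if for every $x\in G\setminus A$ there is a continuous character $\varphi$ with $\varphi(A)\subseteq\mathbb T_+$ and $\varphi(x)\notin\mathbb T_+$. A topological group is locally quasi-convex if it has a zero neighbourhood base of quasi-convex sets. The locally quasi-convex modification $\tau(G)$ of a convergence group $G$ is the finest locally quasi-convex group topology on $G$ that is coarser than the convergence structure of $G$. *)

(* Defs.v *)
From Stdlib Require Import Reals.
Open Scope R_scope.

Record abgroup := AbGroup {
  ag_car :> Type;
  ag0 : ag_car;
  agadd : ag_car -> ag_car -> ag_car;
  agopp : ag_car -> ag_car;
  ag_addA : forall x y z, agadd x (agadd y z) = agadd (agadd x y) z;
  ag_addC : forall x y, agadd x y = agadd y x;
  ag_add0 : forall x, agadd ag0 x = x;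
  ag_addN : forall x, agadd (agopp x) x = ag0
}.
Arguments ag0 {_}.
Arguments agadd {_}.
Arguments agopp {_}.
Definition agsub {G : abgroup} (x y : G) : G := agadd x (agopp y).

Definition T := { t : R | 0 <= t < 1 }.

Lemma frac_part_in (r : R) : 0 <= frac_part r < 1.
Proof. destruct (base_fp r) as [h1 h2]. split; [apply Rge_le; exact h1 | exact h2]. Qed.

Definition rho (r : R) : T := exist _ (frac_part r) (frac_part_in r).
Definition T0 : T := rho 0.
Definition Tadd (s t : T) : T := rho (proj1_sig s + proj1_sig t).

Definition Tplus (t : T) : Prop := exists r, -(1/4) <= r <= 1/4 /\ t = rho r.

Definition Tnear (t s : T) (eps : R) : Prop :=
  exists r, Rabs r < eps /\ s = Tadd t (rho r).

Definition is_filter {X : Type} (F : (X -> Prop) -> Prop) : Prop :=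
  F (fun _ => True) /\
  ~ F (fun _ => False) /\
  (forall A B, F A -> F B -> F (fun x => A x /\ B x)) /\
  (forall A B, F A -> (forall x, A x -> B x) -> F B).

Definition pt_filter {X : Type} (x : X) : (X -> Prop) -> Prop := fun A => A x.

Definition filter_cap {X : Type} (F H : (X -> Prop) -> Prop) : (X -> Prop) -> Prop :=
  fun A => F A /\ H A.

Definition filter_sub {G : abgroup} (F H : (G -> Prop) -> Prop) : (G -> Prop) -> Prop :=
  fun S => exists A B, F A /\ H B /\ forall a b, A a -> B b -> S (agsub a b).

(* conv x F : the filter F converges to x *)
Definition convergence (G : abgroup) := G -> ((G -> Prop) -> Prop) -> Prop.

Definition is_convergence_group (G : abgroup) (conv : convergence G) : Prop :=
  (forall x F, conv x F -> is_filter F) /\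
  (forall x, conv x (pt_filter x)) /\
  (forall x F H, conv x F -> conv x H -> conv x (filter_cap F H)) /\
  (forall x F H, conv x F -> is_filter H -> (forall A, F A -> H A) -> conv x H) /\
  (forall x y F H, conv x F -> conv y H -> conv (agsub x y) (filter_sub F H)).

Definition is_hom {G : abgroup} (phi : G -> T) : Prop :=
  forall x y, phi (agadd x y) = Tadd (phi x) (phi y).

Definition conv_char {G : abgroup} (conv : convergence G) (phi : G -> T) : Prop :=
  is_hom phi /\
  forall x F, conv x F -> forall eps, 0 < eps ->
    exists A, F A /\ forall a, A a -> Tnear (phi x) (phi a) eps.

Definition equicontinuous {G : abgroup} (conv : convergence G) (M : (G -> T) -> Prop) : Prop :=
  forall F, conv ag0 F -> forall eps, 0 < eps ->
    exists A, F A /\ forall phi a, M phi -> A a -> Tnear T0 (phi a) eps.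

Definition diamond {G : abgroup} (H : (G -> T) -> Prop) : G -> Prop :=
  fun x => forall phi, H phi -> Tplus (phi x).

Definition Bfamily {G : abgroup} (conv : convergence G) : (G -> Prop) -> Prop :=
  fun B => exists H : (G -> T) -> Prop,
    (forall phi, H phi -> conv_char conv phi) /\ equicontinuous conv H /\
    (forall x, B x <-> diamond H x).

Definition is_topology {X : Type} (tau : (X -> Prop) -> Prop) : Prop :=
  tau (fun _ => True) /\
  (forall S : (X -> Prop) -> Prop, (forall U, S U -> tau U) ->
     tau (fun x => exists U, S U /\ U x)) /\
  (forall U V, tau U -> tau V -> tau (fun x => U x /\ V x)).

Definition nbhd {X : Type} (tau : (X -> Prop) -> Prop) (x : X) (A : X -> Prop) : Prop :=
  exists U, tau U /\ U x /\ forall y, U y -> A y.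

Definition is_group_topology (G : abgroup) (tau : (G -> Prop) -> Prop) : Prop :=
  is_topology tau /\
  forall x y W, nbhd tau (agsub x y) W ->
    exists U V, nbhd tau x U /\ nbhd tau y V /\
      forall a b, U a -> V b -> W (agsub a b).

Definition top_char {G : abgroup} (tau : (G -> Prop) -> Prop) (phi : G -> T) : Prop :=
  is_hom phi /\
  forall x eps, 0 < eps ->
    exists U, nbhd tau x U /\ forall a, U a -> Tnear (phi x) (phi a) eps.

Definition quasi_convex {G : abgroup} (tau : (G -> Prop) -> Prop) (A : G -> Prop) : Prop :=
  forall x, ~ A x -> exists phi, top_char tau phi /\
    (forall a, A a -> Tplus (phi a)) /\ ~ Tplus (phi x).

Definition locally_quasi_convex {G : abgroup} (tau : (G -> Prop) -> Prop) : Prop :=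
  forall U, nbhd tau ag0 U ->
    exists A, nbhd tau ag0 A /\ quasi_convex tau A /\ forall x, A x -> U x.

Definition zero_nbhd_base {G : abgroup} (tau : (G -> Prop) -> Prop)
  (B : (G -> Prop) -> Prop) : Prop :=
  (forall A, B A -> nbhd tau ag0 A) /\
  (forall U, nbhd tau ag0 U -> exists A, B A /\ forall x, A x -> U x).

Definition id_continuous {G : abgroup} (conv : convergence G)
  (tau : (G -> Prop) -> Prop) : Prop :=
  forall x F, conv x F -> forall U, nbhd tau x U -> F U.

Definition finer {X : Type} (tau mu : (X -> Prop) -> Prop) : Prop :=
  forall U, mu U -> tau U.

(* Main.v *)
Require Import Defs.
From Stdlib Require Import Reals Lra Lia Classical ProofIrrelevance.
Open Scope R_scope.

Lemma T_eq (a b : T) : proj1_sig a = proj1_sig b -> a = b.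
Proof. destruct a as [x hx], b as [y hy]; simpl; intros ->; f_equal; apply proof_irrelevance. Qed.

Lemma up_shift x k : up (x + IZR k) = (up x + k)%Z.
Proof.
  destruct (archimed x) as [h1 h2].
  symmetry; apply tech_up; rewrite plus_IZR; lra.
Qed.

Lemma rho_shift x k : rho (x + IZR k) = rho x.
Proof.
  apply T_eq; simpl; unfold frac_part, Int_part; rewrite up_shift.
  rewrite !minus_IZR, plus_IZR; ring.
Qed.

Lemma rho_eq_int a b k : a - b = IZR k -> rho a = rho b.
Proof. intros h; replace a with (b + IZR k) by lra; apply rho_shift. Qed.

Lemma rho_inj a b : rho a = rho b -> exists k, a - b = IZR k.
Proof.
  intros h; apply (f_equal (@proj1_sig _ _)) in h; simpl in h.
  exists (Int_part a - Int_part b)%Z; unfold frac_part in h; rewrite minus_IZR; lra.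
Qed.

Lemma rho_lift (t : T) : t = rho (proj1_sig t).
Proof.
  destruct t as [x [h1 h2]]; apply T_eq; simpl.
  unfold frac_part, Int_part.
  rewrite <- (tech_up x 1); [simpl; lra | simpl; lra | simpl; lra].
Qed.

Lemma Tadd_rho a b : Tadd (rho a) (rho b) = rho (a + b).
Proof.
  unfold Tadd; simpl; unfold frac_part.
  apply rho_eq_int with (k := (- (Int_part a + Int_part b))%Z).
  rewrite opp_IZR, plus_IZR; ring.
Qed.

Lemma int_small k : Rabs (IZR k) < 1 -> k = 0%Z.
Proof.
  intros h; apply Rabs_def2 in h; destruct h as [h2 h1].
  assert (h3 : IZR (-1) < IZR k) by (simpl; lra); clear h1; rename h3 into h1.
  apply (lt_IZR (-1) k) in h1; apply (lt_IZR k 1) in h2; lia.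
Qed.
Lemma Rabs_le_inv a b : Rabs a <= b -> - b <= a <= b.
Proof. unfold Rabs; destruct (Rcase_abs a); intros; lra. Qed.
Lemma Rabs_lt_inv a b : Rabs a < b -> - b < a < b.
Proof. unfold Rabs; destruct (Rcase_abs a); intros; lra. Qed.

Definition Tdbl (t : T) : T := Tadd t t.
Fixpoint Tpow (k : nat) (t : T) : T :=
  match k with O => t | S k => Tpow k (Tdbl t) end.

Lemma Tpow_rho k a : Tpow k (rho a) = rho (2 ^ k * a).
Proof.
  revert a; induction k as [|k IH]; intros a; simpl.
  - f_equal; ring.
  - unfold Tdbl; rewrite Tadd_rho, IH; f_equal; ring.
Qed.

Lemma pow2_ge1 n : 1 <= 2 ^ n.
Proof. induction n; simpl; lra. Qed.

Lemma dyadic n : forall t, (forall k, (k <= n)%nat -> Tplus (Tpow k t)) ->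
  exists r, Rabs r <= / 4 / 2 ^ n /\ t = rho r.
Proof.
  induction n as [|n IH]; intros t h.
  - destruct (h O (le_n _)) as [r [hr e]]; exists r; split; [|exact e].
    simpl; apply Rabs_le; lra.
  - destruct (IH (Tdbl t)) as [r' [hr' e']].
    { intros k hk; apply (h (S k)); lia. }
    destruct (h O ltac:(lia)) as [r0 [hr0 e0]]; simpl in e0.
    subst t. unfold Tdbl in e'; rewrite Tadd_rho in e'.
    destruct (rho_inj _ _ e') as [k hk].
    assert (q1 := pow2_ge1 n).
    assert (hb : / 4 / 2 ^ n <= / 4).
    { unfold Rdiv; rewrite <- (Rmult_1_r (/4)) at 2; apply Rmult_le_compat_l; [lra|].
      rewrite <- Rinv_1; apply Rinv_le_contravar; lra. }
    assert (k = 0%Z).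
    { apply int_small; rewrite <- hk; apply Rabs_le_inv in hr'.  apply Rabs_def1; lra. }
    subst k; simpl in hk.
    exists r0; split; [|reflexivity].
    assert (r0 = r' / 2) by lra. subst r0.
    simpl. unfold Rdiv; rewrite Rabs_mult, (Rabs_right (/ 2)) by lra.
    rewrite Rinv_mult.
    replace (/ 4 * (/ 2 * / 2 ^ n)) with ((/ 4 * / 2 ^ n) * / 2) by ring.
    apply Rmult_le_compat_r; [lra|]. exact hr'.
Qed.

Lemma small_eps eps : 0 < eps -> exists n, / 4 / 2 ^ n < eps.
Proof.
  intros he; destruct (archimed_cor1 eps he) as [N [h1 h2]].
  exists N.
  assert (hN : INR N < 2 ^ N).
  { clear; induction N; [simpl; lra|]. rewrite S_INR; simpl. assert (1 <= 2 ^ N) by apply pow2_ge1; lra. }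
  assert (0 < INR N) by (apply lt_0_INR; exact h2).
  assert (/ 2 ^ N < / INR N) by (apply Rinv_lt_contravar; nra).
  assert (0 < / 2 ^ N) by (apply Rinv_0_lt_compat; assert (1 <= 2 ^ N) by apply pow2_ge1; lra).
  unfold Rdiv; lra.
Qed.

Lemma Tplus_small r : Rabs r <= / 4 -> Tplus (rho r).
Proof. intros h; exists r; split; [apply Rabs_le_inv in h; lra | reflexivity]. Qed.

Lemma Tlift (t : T) : exists l, t = rho l.
Proof. exists (proj1_sig t); apply rho_lift. Qed.

Lemma T0_rho : T0 = rho 0.
Proof. reflexivity. Qed.

Section Alg.
Variable G : abgroup.
Implicit Types x y a b : G.

Lemma addr0 x : agadd x ag0 = x.
Proof. rewrite ag_addC; apply ag_add0. Qed.
Lemma addrN x : agadd x (agopp x) = ag0.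
Proof. rewrite ag_addC; apply ag_addN. Qed.
Lemma opp_uniq (c z : G) : agadd c z = ag0 -> c = agopp z.
Proof.
  intros h. rewrite <- (addr0 c), <- (addrN z), ag_addA, h, ag_add0; reflexivity.
Qed.
Lemma oppK x : agopp (agopp x) = x.
Proof. symmetry; apply opp_uniq; apply addrN. Qed.
Lemma subrr x : agsub x x = ag0.
Proof. apply addrN. Qed.
Lemma add_sub x a : agadd x (agsub a x) = a.
Proof. unfold agsub. rewrite (ag_addC _ a), ag_addA, addrN, ag_add0; reflexivity. Qed.
Lemma sub_add a b : agadd (agsub a b) b = a.
Proof. rewrite ag_addC; apply add_sub. Qed.
Lemma oppD y b : agopp (agadd y b) = agadd (agopp y) (agopp b).
Proof.
  symmetry; apply opp_uniq.
  rewrite <- ag_addA, (ag_addA _ (agopp b)), (ag_addC _ (agopp b) y), <- ag_addA, ag_addN, addr0, ag_addN.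
  reflexivity.
Qed.
Lemma sub_addadd x y b1 b2 :
  agsub (agadd x b1) (agadd y b2) = agadd (agsub x y) (agsub b1 b2).
Proof.
  unfold agsub; rewrite oppD.
  rewrite <- !ag_addA; f_equal.
  rewrite (ag_addC _ b1), <- ag_addA; f_equal. apply ag_addC.
Qed.
Lemma sub_opp a x : agsub a (agopp x) = agadd x a.
Proof. unfold agsub; rewrite oppK; apply ag_addC. Qed.
Lemma sub0opp x : agsub ag0 (agopp x) = x.
Proof. rewrite sub_opp; apply addr0. Qed.
Lemma sub_sub0 a : agsub a (agsub ag0 a) = agadd a a.
Proof. unfold agsub at 2; rewrite ag_add0; apply sub_opp. Qed.
End Alg.

Arguments addr0 {G}. Arguments addrN {G}. Arguments oppK {G}. Arguments subrr {G}.
Arguments add_sub {G}. Arguments sub_add {G}. Arguments oppD {G}.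
Arguments sub_addadd {G}. Arguments sub_opp {G}. Arguments sub0opp {G}. Arguments sub_sub0 {G}.

Lemma hom0 (G : abgroup) (phi : G -> T) : is_hom phi -> phi ag0 = T0.
Proof.
  intros h. assert (e := h ag0 ag0). rewrite ag_add0 in e.
  destruct (Tlift (phi ag0)) as [l hl]. rewrite hl, Tadd_rho in e.
  destruct (rho_inj _ _ e) as [k hk].
  rewrite hl; apply rho_eq_int with (k := (-k)%Z). rewrite opp_IZR; lra.
Qed.

Lemma Tdbl_rho a : Tdbl (rho a) = rho (2 * a).
Proof. unfold Tdbl; rewrite Tadd_rho; f_equal; ring. Qed.

Lemma Tnear_intro (t : T) (s : T) eps r : Rabs r < eps -> s = Tadd t (rho r) -> Tnear t s eps.
Proof. intros; exists r; auto. Qed.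

Lemma dyadic1 t : Tplus t -> Tplus (Tdbl t) -> exists r, Rabs r <= / 8 /\ t = rho r.
Proof.
  intros h1 h2. destruct (dyadic 1 t) as [r [hr e]].
  { intros k hk; destruct k as [|[|k]]; simpl; auto; lia. }
  exists r; split; auto. simpl in hr; lra.
Qed.

Section Conv.
Variables (G : abgroup) (conv : convergence G) (hG : is_convergence_group G conv).

Lemma filt x F : conv x F -> is_filter F.
Proof. intros h; exact (proj1 hG x F h). Qed.

Lemma cc_dbl phi : conv_char conv phi -> conv_char conv (fun x => Tdbl (phi x)).
Proof.
  intros [hh hc]; split.
  - intros x y; rewrite hh; destruct (Tlift (phi x)) as [l1 e1]; destruct (Tlift (phi y)) as [l2 e2].
    rewrite e1, e2, Tadd_rho, !Tdbl_rho, Tadd_rho; f_equal; ring.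
  - intros x F hF eps he. destruct (hc x F hF (eps/2)) as [A [hA hA']]; [lra|].
    exists A; split; auto. intros a ha. destruct (hA' a ha) as [r [hr e]].
    exists (2*r); split.
    + rewrite Rabs_mult, (Rabs_right 2) by lra; lra.
    + rewrite e. destruct (Tlift (phi x)) as [l e1]; rewrite e1, Tadd_rho, !Tdbl_rho, Tadd_rho; f_equal; ring.
Qed.

Lemma cc_pow k : forall phi, conv_char conv phi -> conv_char conv (fun x => Tpow k (phi x)).
Proof.
  induction k as [|k IH]; intros phi h; [exact h|]. simpl.
  apply (IH (fun x => Tdbl (phi x))). apply cc_dbl; auto.
Qed.

Lemma equi_sub (M1 M2 : (G -> T) -> Prop) : (forall psi, M2 psi -> M1 psi) ->
  equicontinuous conv M1 -> equicontinuous conv M2.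
Proof.
  intros hs h F hF eps he; destruct (h F hF eps he) as [A [hA k]]; exists A; split; auto.
Qed.

Lemma equi_union (M1 M2 : (G -> T) -> Prop) : equicontinuous conv M1 -> equicontinuous conv M2 ->
  equicontinuous conv (fun psi => M1 psi \/ M2 psi).
Proof.
  intros h1 h2 F hF eps he; destruct (h1 F hF eps he) as [A1 [hA1 k1]];
  destruct (h2 F hF eps he) as [A2 [hA2 k2]].
  exists (fun x => A1 x /\ A2 x); split.
  - destruct (filt _ _ hF) as [_ [_ [hI _]]]; auto.
  - intros psi a [h|h] [a1 a2]; eauto.
Qed.

Lemma equi_single psi : conv_char conv psi -> equicontinuous conv (fun chi => chi = psi).
Proof.
  intros [hh hc] F hF eps he; destruct (hc ag0 F hF eps he) as [A [hA k]]; exists A; split; auto.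
  intros chi a -> ha; rewrite <- (hom0 _ _ hh); apply k; auto.
Qed.

Lemma equi_empty : equicontinuous conv (fun _ => False).
Proof.
  intros F hF eps he; exists (fun _ => True); split; [apply (filt _ _ hF)|]. intros _ _ [].
Qed.

Lemma equi_dbl (M : (G -> T) -> Prop) : equicontinuous conv M ->
  equicontinuous conv (fun psi => exists phi, M phi /\ psi = fun x => Tdbl (phi x)).
Proof.
  intros h F hF eps he; destruct (h F hF (eps/2)) as [A [hA k]]; [lra|].
  exists A; split; auto. intros chi a [phi [hphi ->]] ha.
  destruct (k phi a hphi ha) as [r [hr e]]. exists (2*r); split.
  - rewrite Rabs_mult, (Rabs_right 2) by lra; lra.
  - rewrite e, T0_rho, !Tadd_rho, Tdbl_rho; f_equal; ring.
Qed.

Lemma equi_pows phi N : conv_char conv phi ->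
  equicontinuous conv (fun psi => exists k, (k <= N)%nat /\ psi = fun x => Tpow k (phi x)).
Proof.
  intros hc; induction N as [|N IH].
  - apply equi_sub with (fun chi => chi = phi); [|apply equi_single; auto].
    intros psi [k [hk ->]]. assert (k = O) by lia; subst k; reflexivity.
  - apply equi_sub with (fun psi => (exists k, (k <= N)%nat /\ psi = fun x => Tpow k (phi x))
        \/ psi = fun x => Tpow (S N) (phi x)).
    + intros psi [k [hk ->]]. destruct (Nat.le_succ_r k N) as [[h|h] _]; auto.
      * left; exists k; auto.
      * subst k; right; reflexivity.
    + apply equi_union; auto. apply equi_single. apply cc_pow; auto.
Qed.

Lemma B_true : Bfamily conv (fun _ => True).
Proof.
  exists (fun _ => False); split; [intros _ []|]; split; [apply equi_empty|].
  intros x; split; intros _; [intros _ []| trivial].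
Qed.

Lemma Tplus_T0 : Tplus T0.
Proof. rewrite T0_rho; apply Tplus_small; rewrite Rabs_R0; lra. Qed.

Lemma B_zero B : Bfamily conv B -> B ag0.
Proof.
  intros [H [hc [he hB]]]; apply hB; intros phi hphi.
  rewrite (hom0 _ phi (proj1 (hc phi hphi))); apply Tplus_T0.
Qed.

Lemma B_inter B1 B2 : Bfamily conv B1 -> Bfamily conv B2 ->
  exists B, Bfamily conv B /\ forall x, B x -> B1 x /\ B2 x.
Proof.
  intros [H1 [hc1 [he1 hB1]]] [H2 [hc2 [he2 hB2]]].
  exists (diamond (fun psi => H1 psi \/ H2 psi)); split.
  - exists (fun psi => H1 psi \/ H2 psi); split; [intros psi [h|h]; auto|].
    split; [apply equi_union; auto|]. tauto.
  - intros x hx; split; [apply hB1 | apply hB2]; intros phi hphi; apply hx; auto.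
Qed.

Lemma B_half B : Bfamily conv B ->
  exists B', Bfamily conv B' /\ forall a b, B' a -> B' b -> B (agsub a b) /\ B (agadd a b).
Proof.
  intros [H [hc [he hB]]].
  set (H' := fun psi => H psi \/ exists phi, H phi /\ psi = fun x => Tdbl (phi x)).
  exists (diamond H'); split.
  - exists H'; split; [|split; [apply equi_union; auto; apply equi_dbl; auto| tauto]].
    intros psi [h|[phi [hphi ->]]]; auto. apply cc_dbl; auto.
  - intros a b ha hb.
    assert (key : forall y, diamond H' y -> forall phi, H phi -> exists r, Rabs r <= / 8 /\ phi y = rho r).
    { intros y hy phi hphi; apply dyadic1.
      - apply hy; left; auto.
      - apply (hy (fun x => Tdbl (phi x))); right; exists phi; auto. }
    split; apply hB; intros phi hphi; destruct (hc phi hphi) as [hh _];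
      destruct (key a ha phi hphi) as [r1 [hr1 e1]]; destruct (key b hb phi hphi) as [r2 [hr2 e2]].
    + assert (e := hh (agsub a b) b). rewrite sub_add, e1, e2 in e.
      destruct (Tlift (phi (agsub a b))) as [l el]. rewrite el, Tadd_rho in e.
      destruct (rho_inj _ _ e) as [k hk].
      rewrite el. rewrite (rho_eq_int l (r1 - r2) (-k)) by (rewrite opp_IZR; lra).
      apply Tplus_small. unfold Rminus. eapply Rle_trans; [apply Rabs_triang|].
      rewrite Rabs_Ropp; lra.
    + rewrite hh, e1, e2, Tadd_rho. apply Tplus_small.
      eapply Rle_trans; [apply Rabs_triang|]; lra.
Qed.

End Conv.

Definition tauG {G : abgroup} (conv : convergence G) : (G -> Prop) -> Prop :=
  fun U => forall x, U x -> exists B, Bfamily conv B /\ forall b, B b -> U (agadd x b).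

Section Tau.
Variables (G : abgroup) (conv : convergence G) (hG : is_convergence_group G conv).

Lemma nbhd_tau x U : nbhd (tauG conv) x U <->
  exists B, Bfamily conv B /\ forall b, B b -> U (agadd x b).
Proof.
  split.
  - intros [V [hV [hx hVU]]]. destruct (hV x hx) as [B [hB k]]; exists B; split; auto.
  - intros [B [hB k]].
    exists (fun y => exists B', Bfamily conv B' /\ forall b, B' b -> U (agadd y b)).
    split; [|split].
    + intros y [B' [hB' k']]. destruct (B_half _ _ hG B' hB') as [B'' [hB'' k'']].
      exists B''; split; auto. intros b hb. exists B''; split; auto. intros b' hb'.
      rewrite <- ag_addA. apply k'. apply (k'' b b' hb hb').
    + exists B; auto.
    + intros y [B' [hB' k']]. rewrite <- (addr0 y). apply k'. eapply B_zero; eauto.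
Qed.

Lemma tau_top : is_topology (tauG conv).
Proof.
  split; [|split].
  - intros x _; exists (fun _ => True); split; [apply B_true; auto|]; auto.
  - intros S hS x [U [hU hx]]. destruct (hS U hU x hx) as [B [hB k]]. exists B; split; auto.
    intros b hb; exists U; auto.
  - intros U V hU hV x [hx1 hx2]. destruct (hU x hx1) as [B1 [h1 k1]], (hV x hx2) as [B2 [h2 k2]].
    destruct (B_inter _ _ hG B1 B2 h1 h2) as [B [hB k]].
    exists B; split; auto. intros b hb; destruct (k b hb); split; auto.
Qed.

Lemma tau_group : is_group_topology G (tauG conv).
Proof.
  split; [apply tau_top|]. intros x y W hW. apply nbhd_tau in hW. destruct hW as [B [hB k]].
  destruct (B_half _ _ hG B hB) as [B' [hB' k']].
  exists (fun a => exists b, B' b /\ a = agadd x b), (fun a => exists b, B' b /\ a = agadd y b).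
  split; [|split].
  - apply nbhd_tau; exists B'; split; auto; intros b hb; exists b; auto.
  - apply nbhd_tau; exists B'; split; auto; intros b hb; exists b; auto.
  - intros a b [b1 [h1 ->]] [b2 [h2 ->]]. rewrite sub_addadd. apply k. apply (k' b1 b2 h1 h2).
Qed.

Lemma tau_base : zero_nbhd_base (tauG conv) (Bfamily conv).
Proof.
  split.
  - intros A hA; apply nbhd_tau; exists A; split; auto; intros b hb; rewrite ag_add0; auto.
  - intros U hU; apply nbhd_tau in hU; destruct hU as [B [hB k]]; exists B; split; auto.
    intros x hx; rewrite <- (ag_add0 _ x); auto.
Qed.

Lemma tc_tau phi : conv_char conv phi -> top_char (tauG conv) phi.
Proof.
  intros hc; split; [exact (proj1 hc)|]. intros x eps he. destruct (small_eps eps he) as [N hN].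
  set (K := fun psi => exists k, (k <= N)%nat /\ psi = fun y => Tpow k (phi y)).
  exists (fun a => exists b, diamond K b /\ a = agadd x b). split.
  - apply nbhd_tau. exists (diamond K); split.
    + exists K; split; [|split; [apply equi_pows; auto| tauto]].
      intros psi [k [_ ->]]; apply cc_pow; auto.
    + intros b hb; exists b; auto.
  - intros a [b [hb ->]]. destruct (dyadic N (phi b)) as [r [hr e]].
    { intros k hk; apply (hb (fun y => Tpow k (phi y))). exists k; auto. }
    exists r; split; [lra|]. rewrite (proj1 hc), e; reflexivity.
Qed.

Lemma tau_lqc : locally_quasi_convex (tauG conv).
Proof.
  intros U hU. destruct (proj2 tau_base U hU) as [B [hB k]].
  exists B; split; [apply (proj1 tau_base); auto|split; auto].
  intros x hx. destruct hB as [H [hc [he hBH]]].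
  assert (hn : ~ diamond H x) by (intro hd; apply hx; apply hBH; auto).
  apply not_all_ex_not in hn. destruct hn as [phi hphi]. apply imply_to_and in hphi.
  destruct hphi as [h1 h2].
  exists phi; split; [apply tc_tau; auto| split; auto]. intros a ha; apply hBH in ha; apply ha; auto.
Qed.

Lemma tau_idc : id_continuous conv (tauG conv).
Proof.
  intros x F hF U hU. apply nbhd_tau in hU. destruct hU as [B [hB k]].
  destruct hB as [H [hc [he hBH]]].
  pose proof hG as [hfil [hpt [_ [_ hsub]]]].
  assert (h0 : conv ag0 (filter_sub F (pt_filter x))) by (rewrite <- (subrr x); apply hsub; auto).
  destruct (he _ h0 (/4)) as [A [hA kA]]; [lra|].
  destruct hA as [A1 [B1 [hA1 [hB1 kAB]]]].
  destruct (hfil x F hF) as [_ [_ [_ hup]]]. apply (hup A1); auto. intros a ha.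
  rewrite <- (add_sub x a). apply k. apply hBH. intros phi hphi.
  destruct (kA phi (agsub a x) hphi (kAB a x ha hB1)) as [r [hr e]].
  rewrite e, T0_rho, Tadd_rho. apply Tplus_small. rewrite Rplus_0_l; lra.
Qed.

End Tau.

Section Mu.
Variables (G : abgroup) (mu : (G -> Prop) -> Prop) (hmu : is_group_topology G mu).

Lemma nbhd_up x (U V : G -> Prop) : nbhd mu x U -> (forall y, U y -> V y) -> nbhd mu x V.
Proof. intros [W [h1 [h2 h3]]] h; exists W; auto. Qed.

Lemma nbhd_pt x (U : G -> Prop) : nbhd mu x U -> U x.
Proof. intros [W [h1 [h2 h3]]]; auto. Qed.

Lemma nbhd_inter x (U V : G -> Prop) : nbhd mu x U -> nbhd mu x V -> nbhd mu x (fun y => U y /\ V y).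
Proof.
  intros [W1 [h1 [h2 h3]]] [W2 [k1 [k2 k3]]].
  exists (fun y => W1 y /\ W2 y); split; [apply (proj2 (proj2 (proj1 hmu))); auto|]. split; auto.
  intros y [a b]; auto.
Qed.

Lemma nbhd_trans x U : nbhd mu x U -> nbhd mu ag0 (fun a => U (agadd x a)).
Proof.
  intros h. destruct hmu as [_ hc].
  assert (h' : nbhd mu (agsub ag0 (agopp x)) U) by (rewrite sub0opp; auto).
  destruct (hc _ _ _ h') as [U' [V' [h1 [h2 k]]]].
  apply nbhd_up with U'; auto. intros a ha. rewrite <- (sub_opp a x). apply k; auto.
  apply nbhd_pt; auto.
Qed.

Lemma nbhd_dbl W : nbhd mu ag0 W -> exists N, nbhd mu ag0 N /\ forall a, N a -> W (agadd a a).
Proof.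
  intros h. destruct hmu as [_ hc].
  assert (h' : nbhd mu (agsub ag0 ag0) W) by (rewrite subrr; auto).
  destruct (hc _ _ _ h') as [U1 [V1 [h1 [h2 k1]]]].
  assert (h2' : nbhd mu (agsub ag0 ag0) V1) by (rewrite subrr; auto).
  destruct (hc _ _ _ h2') as [U2 [V2 [g1 [g2 k2]]]].
  exists (fun a => U1 a /\ (U2 a /\ V2 a)). split.
  - apply nbhd_inter; auto. apply nbhd_inter; auto.
  - intros a [a1 [a2 a3]]. rewrite <- sub_sub0. apply k1; auto. apply k2; auto. apply nbhd_pt; auto.
Qed.

Fixpoint gpow (k : nat) (a : G) : G :=
  match k with O => a | S k => gpow k (agadd a a) end.

Lemma hom_gpow phi : is_hom phi -> forall k a, phi (gpow k a) = Tpow k (phi a).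
Proof.
  intros hh k; induction k as [|k IH]; intros a; simpl; auto.
  rewrite IH, hh; reflexivity.
Qed.

Lemma nbhd_gpow n A : nbhd mu ag0 A ->
  exists W, nbhd mu ag0 W /\ forall a, W a -> forall k, (k <= n)%nat -> A (gpow k a).
Proof.
  intros hA; induction n as [|n IH].
  - exists A; split; auto. intros a ha k hk; assert (k = O) by lia; subst; auto.
  - destruct IH as [W [hW kW]]. destruct (nbhd_dbl W hW) as [N [hN kN]].
    exists (fun a => A a /\ N a); split; [apply nbhd_inter; auto|].
    intros a [a1 a2] k hk. destruct k as [|k]; simpl; auto. apply kW; auto; lia.
Qed.

End Mu.

Lemma tau_max (G : abgroup) (conv : convergence G) (mu : (G -> Prop) -> Prop) :
  is_group_topology G mu -> locally_quasi_convex mu -> id_continuous conv mu -> finer (tauG conv) mu.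
Proof.
  intros hmu hlqc hid U hU x hx.
  assert (h1 : nbhd mu x U) by (exists U; auto).
  apply (nbhd_trans G mu hmu) in h1. destruct (hlqc _ h1) as [A [hA [hq hAU]]].
  exists A; split; [| intros b hb; apply hAU; auto].
  exists (fun phi => top_char mu phi /\ forall a, A a -> Tplus (phi a)). split; [|split].
  - intros phi [[hh hc] _]; split; auto. intros y F hF eps he.
    destruct (hc y eps he) as [V [hV k]]. exists V; split; auto. apply (hid y F hF V hV).
  - intros F hF eps he. destruct (small_eps eps he) as [N hN].
    destruct (nbhd_gpow G mu hmu N A hA) as [W [hW kW]].
    exists W; split; [apply (hid _ _ hF); auto|].
    intros phi a [[hh _] hphiA] ha. destruct (dyadic N (phi a)) as [r [hr e]].
    { intros k hk; rewrite <- (hom_gpow G phi hh); auto. }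
    exists r; split; [lra|]. rewrite e, T0_rho, Tadd_rho, Rplus_0_l; reflexivity.
  - intros y; split.
    + intros hy phi [_ h]; auto.
    + intros hy. apply NNPP; intro hn. destruct (hq y hn) as [phi [h1' [h2' h3']]].
      apply h3'; apply hy; split; auto.
Qed.

Theorem theorem2p10 (G : abgroup) (conv : convergence G)
  (hG : is_convergence_group G conv) :
  exists tau : (G -> Prop) -> Prop,
    is_group_topology G tau /\
    zero_nbhd_base tau (Bfamily conv) /\
    locally_quasi_convex tau /\
    id_continuous conv tau /\
    (forall mu : (G -> Prop) -> Prop,
       is_group_topology G mu -> locally_quasi_convex mu ->
       id_continuous conv mu -> finer tau mu).
Proof.
  exists (tauG conv). split; [apply tau_group; auto|]. split; [apply tau_base; auto|].
  split; [apply tau_lqc; auto|]. split; [apply tau_idc; auto|].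
  intros mu h1 h2 h3; apply tau_max; auto.
Qed.
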